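(* Let $G$ and $H$ be connected graphs with $|V(G)|\ge 3$ and $|V(H)|\ge 2$, such that at least one of $G$, $H$ is not complete. Then $$rx_3(G[H])\le rx_3(G)+rc(H).$$ In particular, if $\mathrm{diam}(G)=rx_3(G)$ and $H$ is complete, then $rx_3(G[H])=rx_3(G)+rc(H)$.
   Context: The lexicographic product $G[H]$ has vertex set $V(G)\times V(H)$, with $(g_1,h_1)$ and $(g_2,h_2)$ adjacent iff $g_1g_2\in E(G)$, or $g_1=g_2$ and $h_1h_2\in E(H)$. An edge coloring may give adjacent edges the same color. A path (tree) is rainbow if its edges have pairwise distinct colors. The rainbow connection number $rc(H)$ of a connected graph $H$ is the minimum number of colors in an edge coloring such that every two distinct vertices are joined by a rainbow path. For a connected graph on at least $3$ vertices, $rx_3$ is the minimum number of colors in an edge coloring such that every set of $3$ vertices lies in some rainbow tree. $\mathrm{diam}(G)$ is the diameter of $G$. *)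

(* Defs.v *)
From mathcomp Require Import all_boot.
Set Implicit Arguments. Unset Strict Implicit. Unset Printing Implicit Defensive.

Section Graphs.
Variable T : finType.
Implicit Types (g : rel T).

Definition simple_graph g := symmetric g /\ irreflexive g.
Definition connected_graph g := forall x y : T, connect g x y.
Definition complete_graph g := forall x y : T, x != y -> g x y.

(* An edge colouring with (at most) k colours: a colour c x y = c y x < k
   assigned to every edge xy (adjacent edges may share a colour). *)
Definition edge_coloring g (k : nat) (c : T -> T -> nat) :=
  forall x y, g x y -> c x y = c y x /\ c x y < k.

Definition rainbow_path g (c : T -> T -> nat) (x y : T) (p : seq T) :=
  [/\ path g x p, uniq (x :: p), last x p = y & uniq (pairmap c x p)].

(* A rainbow tree containing S: a list of edges es of g (stored as ordered
   pairs) with pairwise distinct colours (hence pairwise distinct as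
   unordered edges), whose spanned subgraph (vertex set = endpoints) is
   connected with #edges = #vertices - 1 (i.e. a tree), and whose vertex
   set contains S. *)
Definition tree_vertices (es : seq (T * T)) : {set T} :=
  [set x | has (fun e : T * T => (e.1 == x) || (e.2 == x)) es].
Definition tree_rel (es : seq (T * T)) : rel T :=
  fun x y => ((x, y) \in es) || ((y, x) \in es).
Definition rainbow_tree g (c : T -> T -> nat) (S : {set T}) (es : seq (T * T)) :=
  [/\ all (fun e : T * T => g e.1 e.2) es,
      uniq (map (fun e : T * T => c e.1 e.2) es),
      {in tree_vertices es &, forall x y, connect (tree_rel es) x y},
      size es = #|tree_vertices es| - 1
    & S \subset tree_vertices es].

Definition rainbow_connecting g k :=
  exists c, edge_coloring g k c /\
    forall x y : T, x != y -> exists p, rainbow_path g c x y p.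

Definition rainbow_3_connecting g k :=
  exists c, edge_coloring g k c /\
    forall S : {set T}, #|S| = 3 -> exists es, rainbow_tree g c S es.

Definition is_rc g k :=
  rainbow_connecting g k /\ forall k', rainbow_connecting g k' -> k <= k'.
Definition is_rx3 g k :=
  rainbow_3_connecting g k /\ forall k', rainbow_3_connecting g k' -> k <= k'.

Definition is_diam g d :=
  (forall x y : T, exists p, [/\ path g x p, last x p = y & size p <= d]) /\
  exists x y : T, forall p, path g x p -> last x p = y -> d <= size p.
End Graphs.

Definition lexprod (T U : finType) (g : rel T) (h : rel U) : rel (T * U) :=
  fun u v => g u.1 v.1 || ((u.1 == v.1) && h u.2 v.2).

(* Main.v *)
Require Import Defs.
From mathcomp Require Import all_boot.
From mathcomp Require Import zify.
Set Implicit Arguments. Unset Strict Implicit. Unset Printing Implicit Defensive.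

Section Trees.
Variable V : finType.
Implicit Types (es : seq (V * V)) (r x y : V) (p : seq V).

Definition pe r p : seq (V * V) := pairmap pair r p.

Lemma tv_cat es1 es2 :
  tree_vertices (es1 ++ es2) = tree_vertices es1 :|: tree_vertices es2.
Proof. by apply/setP=> x; rewrite !inE has_cat. Qed.

Lemma in_tv_pe r p x : (x \in tree_vertices (pe r p)) = (p != [::]) && (x \in r :: p).
Proof.
rewrite inE; elim: p r => [|y p IH] r //=.
rewrite IH; case: p {IH} => [|z p] /=; rewrite !inE ?orbF ![_ == x]eq_sym;
  by case: (x == r); case: (x == y); rewrite /= ?orbT.
Qed.

Lemma tree_rel_cat_l es1 es2 : subrel (tree_rel es1) (tree_rel (es1 ++ es2)).
Proof. by move=> x y; rewrite /tree_rel !mem_cat => /orP[]->; rewrite ?orbT. Qed.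
Lemma tree_rel_cat_r es1 es2 : subrel (tree_rel es2) (tree_rel (es1 ++ es2)).
Proof. by move=> x y; rewrite /tree_rel !mem_cat => /orP[]->; rewrite ?orbT. Qed.

Lemma path_pe r p : path (tree_rel (pe r p)) r p.
Proof.
elim: p r => [|y p IH] r //=; apply/andP; split.
  by rewrite /tree_rel inE eqxx.
apply: sub_path (IH y) => a b; rewrite /tree_rel /= !inE => /orP[]->; rewrite ?orbT //.
Qed.

Lemma connect_mono (e e' : rel V) : subrel e e' -> subrel (connect e) (connect e').
Proof. by move=> H; apply: connect_sub => a b /H; apply: connect1. Qed.

Definition Wv es r := r |: tree_vertices es.
Definition good es r :=
  (forall x, x \in Wv es r -> connect (tree_rel es) r x) /\ size es = #|Wv es r| - 1.

Lemma good_nil r : good [::] r.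
Proof.
split.
  move=> x; rewrite /Wv !inE /= orbF => /eqP ->; exact: connect0.
have -> : Wv [::] r = [set r] by apply/setP=> x; rewrite /Wv !inE /= orbF.
by rewrite cards1.
Qed.

Lemma Wv_pend es r r' p : r' \in Wv es r ->
  Wv (es ++ pe r' p) r = Wv es r :|: [set x in p].
Proof.
move=> Hr; apply/setP=> x; rewrite /Wv tv_cat !in_setU1 !in_setU in_tv_pe in_set.
case: p => [|y p] /=; first by rewrite !inE !orbF.
move: Hr; rewrite /Wv !inE => Hr; case: (x =P r') => [->|_] /=.
  by rewrite !orbT Hr.
by rewrite !orbA.
Qed.

Lemma good_pend es r r' p : good es r -> r' \in Wv es r -> uniq p ->
  (forall x, x \in p -> x \notin Wv es r) -> good (es ++ pe r' p) r.
Proof.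
move=> [Hc Hs] Hr Hu Hd; split.
  move=> x; rewrite Wv_pend // in_setU in_set => /orP[Hx|Hx].
    have H1 := connect_mono (@tree_rel_cat_l es (pe r' p)) (Hc _ Hx); exact: H1.
  have H1 := connect_mono (@tree_rel_cat_l es (pe r' p)) (Hc _ Hr). apply: connect_trans H1 _.
  have H2 : connect (tree_rel (pe r' p)) r' x.
    by apply: (path_connect (path_pe r' p)); rewrite inE Hx orbT.
  have H3 := connect_mono (@tree_rel_cat_r es (pe r' p)) H2; exact: H3.
rewrite Wv_pend // cardsU size_cat Hs /pe size_pairmap.
have -> : Wv es r :&: [set x in p] = set0.
  apply/setP=> x; rewrite in_setI in_set in_set0; apply/negP=> /andP[H1 H2].
  by move: (Hd _ H2); rewrite H1.
rewrite cards0 subn0.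
have -> : #|[set x in p]| = size p.
  by rewrite cardsE; apply/card_uniqP.
have : 0 < #|Wv es r| by apply/card_gt0P; exists r; rewrite !inE eqxx.
lia.
Qed.

Lemma good_tree es r : good es r -> r \in tree_vertices es ->
  {in tree_vertices es &, forall x y, connect (tree_rel es) x y} /\
  size es = #|tree_vertices es| - 1.
Proof.
move=> [Hc Hs] Hr.
have EW : Wv es r = tree_vertices es.
  by apply/setP=> x; rewrite /Wv in_setU1; case: eqP => // ->; rewrite Hr.
have Hsym : connect_sym (tree_rel es).
  apply: sym_connect_sym => a b; by rewrite /tree_rel orbC.
split; last by rewrite -EW.
move=> x y Hx Hy; apply: connect_trans (Hc y _); last by rewrite EW.
by rewrite Hsym; apply: Hc; rewrite EW.
Qed.

End Trees.

Section Seqs.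
Variable T : finType.

Definition fpairs (s : seq T) : seq (T * T) :=
  if s is x :: p then pairmap pair x p else [::].
Definition key (e : T * T) : {set T} := [set e.1; e.2].
Definition swap (e : T * T) : T * T := (e.2, e.1).

Lemma key_swap e : key (swap e) = key e.
Proof. by apply/setP=> z; rewrite !inE orbC. Qed.

Lemma fpairs_cat s1 x s2 : fpairs (s1 ++ x :: s2) = fpairs (rcons s1 x) ++ fpairs (x :: s2).
Proof.
case: s1 => [|y s1] //=.
by rewrite -cat_rcons pairmap_cat last_rcons.
Qed.

Lemma fpairs_rev s : fpairs (rev s) = rev (map swap (fpairs s)).
Proof.
elim: s => [|x s IH] //; case: s IH => [|y s] IH //.
rewrite rev_cons -cats1 rev_cons -cats1 -catA /= fpairs_cat cats1 -rev_cons.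
rewrite IH /= rev_cons -cats1 /=; congr (_ ++ _).
Qed.

Lemma path_fpairs (e : rel T) x p : path e x p = all (fun pr => e pr.1 pr.2) (fpairs (x :: p)).
Proof. by elim: p x => [|y p IH] x //=; rewrite IH. Qed.

Lemma pairmap_fpairs (A : Type) (f : T -> T -> A) x p :
  pairmap f x p = map (fun pr => f pr.1 pr.2) (fpairs (x :: p)).
Proof. by elim: p x => [|y p IH] x //=; rewrite IH. Qed.

Lemma fpairs_mem s pr : pr \in fpairs s -> (pr.1 \in s) && (pr.2 \in s).
Proof.
elim: s => [|x s IH] //; case: s IH => [|y s] IH //=.
rewrite inE => /orP[/eqP->|H]; first by rewrite /= !inE !eqxx orbT.
by move: (IH H); rewrite /= !inE => /andP[->->]; rewrite !orbT.
Qed.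

Lemma fpairs_fst x p pr : pr \in fpairs (x :: p) -> pr.1 \in belast x p.
Proof.
elim: p x => [|y p IH] x //=; rewrite inE => /orP[/eqP->|H]; first by rewrite inE eqxx.
by rewrite inE (IH y H) orbT.
Qed.

Lemma key_uniq s : uniq s -> uniq (map key (fpairs s)).
Proof.
elim: s => [|x s IH] //; case: s IH => [|y s] IH //= /andP[Hx Hu].
rewrite IH // andbT; apply/mapP => -[pr Hpr Hk].
have /andP[H1 H2] := fpairs_mem (s:=y::s) Hpr.
have : x \in key pr by rewrite -Hk !inE eqxx.
rewrite !inE => /orP[]/eqP E; move: Hx; by rewrite E ?H1 ?H2.
Qed.

Lemma last_rev (x : T) (s : seq T) : last x (rev s) = head x s.
Proof. by case: s => [|y s] //=; rewrite rev_cons last_rcons. Qed.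

Lemma uniq_map_inj (A : eqType) (f : T * T -> A) (s : seq (T * T)) :
  uniq (map f s) -> {in s &, injective f}.
Proof.
elim: s => [|a s IH] //= /andP[Ha Hu] x y.
rewrite !inE => /orP[/eqP->|Hx] /orP[/eqP->|Hy] E //.
- by move: Ha; rewrite E map_f.
- by move: Ha; rewrite -E map_f.
- exact: IH.
Qed.

End Seqs.
Arguments key {T}.
Arguments swap {T}.
Arguments fpairs {T}.

Section Rain.
Variable T : finType.
Variables (g : rel T) (k : nat) (c : T -> T -> nat) (es : seq (T * T)).
Hypothesis gsym : symmetric g.
Hypothesis girr : irreflexive g.
Hypothesis cP : edge_coloring g k c.
Hypothesis esg : all (fun e : T * T => g e.1 e.2) es.
Hypothesis esu : uniq (map (fun e : T * T => c e.1 e.2) es).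
Hypothesis esc : {in tree_vertices es &, forall x y, connect (tree_rel es) x y}.

Definition col (pr : T * T) := c pr.1 pr.2.

Lemma tree_rel_g x y : tree_rel es x y -> g x y.
Proof.
rewrite /tree_rel => /orP[]H; have := allP esg _ H => //=.
by rewrite gsym.
Qed.

Lemma col_key (e1 e2 : T * T) : tree_rel es e1.1 e1.2 -> tree_rel es e2.1 e2.2 ->
  col e1 = col e2 -> key e1 = key e2.
Proof.
have H : forall e, tree_rel es e.1 e.2 ->
   exists2 f, f \in es & (key f = key e /\ c f.1 f.2 = col e).
  move=> [a b] /orP[]H /=.
    by exists (a, b).
  exists (b, a) => //; split; first by rewrite (key_swap (a,b)).
  have := allP esg _ H => /= Hg; by rewrite /col /= (proj1 (cP Hg)).
move=> /H [f1 F1 [K1 C1]] /H [f2 F2 [K2 C2]] E.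
rewrite -K1 -K2; congr key.
apply: (uniq_map_inj esu) => //=; by rewrite C1 C2.
Qed.

Lemma col_uniq (E : seq (T * T)) : all (fun e => tree_rel es e.1 e.2) E ->
  uniq (map key E) -> uniq (map col E).
Proof.
elim: E => [|e E IH] //= /andP[He HE] /andP[Hk Hu]; rewrite IH // andbT.
apply/mapP => -[f Hf Ec]; move/negP: Hk; apply.
by rewrite (col_key He (allP HE _ Hf) Ec) map_f.
Qed.

Lemma tree_path x y : x \in tree_vertices es -> y \in tree_vertices es ->
  exists p, [/\ path (tree_rel es) x p, last x p = y & uniq (x :: p)].
Proof.
move=> Hx Hy; move: (esc Hx Hy) => /connectP[p Hp ->].
case: (shortenP Hp) => p' Hp' Hu _; by exists p'.
Qed.

Lemma rainbow_tree_path x y : x \in tree_vertices es -> y \in tree_vertices es ->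
  exists p, [/\ path g x p, last x p = y, uniq (x :: p) & uniq (pairmap c x p)].
Proof.
move=> Hx Hy; have [p [Hp Hl Hu]] := tree_path Hx Hy.
exists p; split => //.
  by apply: sub_path Hp => a b; apply: tree_rel_g.
rewrite pairmap_fpairs; apply: col_uniq; first by rewrite -path_fpairs.
exact: key_uniq.
Qed.


Lemma all_rev_swap (E : seq (T * T)) : all (fun e => tree_rel es e.1 e.2) E ->
  all (fun e => tree_rel es e.1 e.2) (rev (map swap E)).
Proof.
move=> H; rewrite all_rev all_map; apply/allP => e He /=.
by have := allP H _ He; rewrite /tree_rel orbC.
Qed.

Lemma spider x1 x2 x3 : x1 \in tree_vertices es -> x2 \in tree_vertices es ->
  x3 \in tree_vertices es ->
  exists z l1 l2 l3, [/\ path g z l1, path g z l2 & path g z l3] /\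
    [/\ last z l1 = x1, last z l2 = x2 & last z l3 = x3] /\
    uniq (z :: l1 ++ l2 ++ l3) /\
    uniq (pairmap c z l1 ++ pairmap c z l2 ++ pairmap c z l3).
Proof.
move=> H1 H2 H3.
have [p [Hp Hpl Hpu]] := tree_path H1 H2.
have [q [Hq Hql Hqu]] := tree_path H3 H1.
set L := x1 :: p in Hpu; set M := x3 :: q in Hqu.
have hasM : has (mem L) M.
  apply/hasP; exists x1; last by rewrite /= /L mem_head.
  by rewrite /M -Hql mem_last.
set j := find (mem L) M.
have jlt : j < size M by rewrite -has_find.
set z := nth x3 M j.
have zL : z \in L := nth_find x3 hasM.
set M1 := take j M.
have M1L : ~~ has (mem L) M1 by rewrite /M1 has_take // ltnn.
have EM : M1 ++ z :: drop j.+1 M = M by rewrite /M1 /z -drop_nth // cat_take_drop.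
set i := index z L.
have Ez : nth x1 L i = z := nth_index x1 zL.
have ilt : i < size L by rewrite index_mem.
set L1 := take i L; set L2 := drop i.+1 L.
have EL : L1 ++ z :: L2 = L by rewrite /L1 /L2 -{1}Ez -drop_nth // cat_take_drop.
have allL : all (fun e => tree_rel es e.1 e.2) (fpairs L) by rewrite -path_fpairs.
have allM : all (fun e => tree_rel es e.1 e.2) (fpairs M) by rewrite -path_fpairs.
have FL : fpairs L = fpairs (rcons L1 z) ++ fpairs (z :: L2) by rewrite -EL fpairs_cat.
have FM : fpairs M = fpairs (rcons M1 z) ++ fpairs (z :: drop j.+1 M)
  by rewrite -{1}EM fpairs_cat.
have E1 : fpairs (z :: rev L1) = rev (map swap (fpairs (rcons L1 z))) by rewrite -fpairs_rev rev_rcons.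
have E3 : fpairs (z :: rev M1) = rev (map swap (fpairs (rcons M1 z))) by rewrite -fpairs_rev rev_rcons.
have A1 : all (fun e => tree_rel es e.1 e.2) (fpairs (z :: rev L1)).
  by rewrite E1; apply: all_rev_swap; move: allL; rewrite FL all_cat => /andP[].
have A2 : all (fun e => tree_rel es e.1 e.2) (fpairs (z :: L2)).
  by move: allL; rewrite FL all_cat => /andP[].
have A3 : all (fun e => tree_rel es e.1 e.2) (fpairs (z :: rev M1)).
  by rewrite E3; apply: all_rev_swap; move: allM; rewrite FM all_cat => /andP[].
have tg : forall l, all (fun e => tree_rel es e.1 e.2) (fpairs (z :: l)) -> path g z l.
  by move=> l Hl; rewrite -path_fpairs in Hl; apply: sub_path Hl => a b; apply: tree_rel_g.
have uM1 : uniq M1 by apply: take_uniq.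
have zM1 : z \notin M1.
  by apply/negP => Hz; move/hasP: M1L; apply; exists z.
have uL : uniq (L1 ++ z :: L2) by rewrite EL.
exists z, (rev L1), L2, (rev M1); split; [|split; [|split]].
- by split; apply: tg.
- split.
  + rewrite last_rev /L1; case Ei: i Ez => [|i'] Ez' //=.
  + have -> : last z L2 = last x1 (L1 ++ z :: L2) by rewrite last_cat.
    by rewrite EL /L /= Hpl.
  + rewrite last_rev /M1; case Ej: j => [|j'] //=.
    by rewrite /z Ej.
- have P : perm_eq (z :: rev L1 ++ L2 ++ rev M1) ((L1 ++ z :: L2) ++ M1).
    rewrite -catA -cat_cons (perm_catCA [:: z]) /= -cat_cons.
    rewrite perm_cat //; first by rewrite perm_rev.
    by rewrite perm_cons perm_cat // perm_rev.
  rewrite (perm_uniq P) cat_uniq uL uM1 andbT /=; move: M1L; by rewrite -EL.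
- rewrite !pairmap_fpairs -!map_cat; apply: col_uniq.
    by rewrite !all_cat A1 A2 A3.
  rewrite E1 E3 !map_cat !map_rev -!map_comp.
  have KS : forall E : seq (T * T), map (key \o swap) E = map key E.
    by move=> E; apply: eq_map => e /=; rewrite key_swap.
  rewrite !KS.
  set K1 := map key (fpairs (rcons L1 z)); set K2 := map key (fpairs (z :: L2)).
  set K3 := map key (fpairs (rcons M1 z)).
  have U12 : uniq (K1 ++ K2) by rewrite /K1 /K2 -map_cat -FL; apply: key_uniq.
  have U3 : uniq K3 by apply: key_uniq; rewrite rcons_uniq zM1.
  have D : ~~ has (mem (K1 ++ K2)) K3.
    apply/hasP => -[K HK3 HK12].
    move: HK3; rewrite /K3; case EM1: M1 => [|m M1'] //=.
    move=> /mapP[pr Hpr EK].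
    have Hf := fpairs_fst Hpr; rewrite belast_rcons -EM1 in Hf.
    move: HK12; rewrite /K1 /K2 -map_cat -FL => /mapP[pr' Hpr' EK'].
    have /andP[Ha Hb] := fpairs_mem Hpr'.
    have : pr.1 \in key pr' by rewrite -EK' EK !inE eqxx.
    rewrite !inE => /orP[]/eqP E; move/hasP: M1L; apply; exists pr.1 => //;
      by rewrite E.
  have P : perm_eq (rev K1 ++ K2 ++ rev K3) ((K1 ++ K2) ++ K3).
    by rewrite -catA perm_cat ?perm_rev // perm_cat ?perm_rev.
  by rewrite (perm_uniq P) cat_uniq U12 U3 D.
Qed.

End Rain.

Section Build.
Variable V : finType.
Implicit Types (es : seq (V * V)) (r x y : V) (p : seq V).

Lemma Wv_nil r : Wv [::] r = [set r].
Proof. by apply/setP=> x; rewrite /Wv !inE /= orbF. Qed.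

Lemma Wv_root es r : r \in Wv es r.
Proof. by rewrite /Wv in_setU1 eqxx. Qed.

Lemma Wv_cat_l es es' r x : x \in Wv es r -> x \in Wv (es ++ es') r.
Proof. by rewrite /Wv tv_cat !in_setU1 in_setU => /orP[]->; rewrite ?orbT. Qed.

Lemma Wv_pe_in es r r' p x : r' \in Wv es r -> x \in p -> x \in Wv (es ++ pe r' p) r.
Proof. by move=> H Hx; rewrite Wv_pend // in_setU in_set Hx orbT. Qed.

Lemma Wv_pe_last es r r' p : r' \in Wv es r -> last r' p \in Wv (es ++ pe r' p) r.
Proof.
move=> H; case: p => [|y p]; first exact: Wv_cat_l.
apply: Wv_pe_in => //; by rewrite /= mem_last.
Qed.

Lemma Wv_pe_set es r r' p : r' \in Wv es r -> Wv (es ++ pe r' p) r = Wv es r :|: [set x in p].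
Proof. exact: Wv_pend. Qed.

Lemma all_pe (e : rel V) r p : all (fun pr => e pr.1 pr.2) (pe r p) = path e r p.
Proof. by rewrite path_fpairs. Qed.

Lemma map_pe (A : Type) (f : V -> V -> A) r p : map (fun pr => f pr.1 pr.2) (pe r p) = pairmap f r p.
Proof. by rewrite pairmap_fpairs. Qed.

Lemma neighbor (e : rel V) : irreflexive e -> connected_graph e -> 1 < #|V| ->
  forall x, exists y, e x y.
Proof.
move=> eirr econ /card_gt1P [u [v [_ _ Huv]]] x.
have [w Hw] : exists w, w != x.
  case: (eqVneq u x) => [Eu|]; last by exists u.
  by exists v; rewrite -Eu eq_sym.
move: (econ x w) => /connectP [[|y p] Hp El]; first by move: Hw; rewrite El eqxx.
by exists y; case/andP: Hp.
Qed.

Lemma tv_first es' r p : p != [::] -> r \in tree_vertices (([::] ++ pe r p) ++ es').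
Proof. by move=> Hp; rewrite tv_cat in_setU in_tv_pe Hp mem_head. Qed.

Lemma good_first r p : uniq (r :: p) -> good ([::] ++ pe r p) r.
Proof.
move=> /andP[Hr Hu]; apply: good_pend (good_nil _) (Wv_root _ _) Hu _.
by move=> v Hv; rewrite Wv_nil inE; apply: contraNneq Hr => <-.
Qed.

Lemma tv_first0 r p : p != [::] -> r \in tree_vertices ([::] ++ pe r p).
Proof. by move=> Hp; rewrite in_tv_pe Hp mem_head. Qed.

End Build.

Section Prod.
Variables (T U : finType) (g : rel T) (h : rel U) (a b : nat).
Variables (cG : T -> T -> nat) (cH : U -> U -> nat).
Hypothesis gsym : symmetric g.
Hypothesis girr : irreflexive g.
Hypothesis hsym : symmetric h.
Hypothesis hirr : irreflexive h.
Hypothesis cGP : edge_coloring g a cG.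
Hypothesis cHP : edge_coloring h b cH.
Hypothesis a2 : 1 < a.
Hypothesis hrc : forall u v, u != v -> exists p, rainbow_path h cH u v p.
Hypothesis gnb : forall x, exists y, g x y.
Hypothesis hnb : forall u, exists v, h u v.
Hypothesis gpath : forall x y, x != y ->
  exists q, [/\ path g x q, last x q = y, uniq (x :: q) & uniq (pairmap cG x q)].
Hypothesis gspider : forall x1 x2 x3, x1 != x2 -> x1 != x3 -> x2 != x3 ->
  exists z l1 l2 l3, [/\ path g z l1, path g z l2 & path g z l3] /\
    [/\ last z l1 = x1, last z l2 = x2 & last z l3 = x3] /\
    uniq (z :: l1 ++ l2 ++ l3) /\
    uniq (pairmap cG z l1 ++ pairmap cG z l2 ++ pairmap cG z l3).

Local Notation LP := (lexprod g h).

Definition phi x y := if cG x y == 0 then 1 else 0.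
Definition Cl (v w : T * U) :=
  if v.1 == w.1 then a + cH v.2 w.2 else if v.2 == w.2 then phi v.1 w.1 else cG v.1 w.1.

Lemma g_neq x y : g x y -> x != y.
Proof. by apply: contraTneq => ->; rewrite girr. Qed.
Lemma h_neq x y : h x y -> x != y.
Proof. by apply: contraTneq => ->; rewrite hirr. Qed.

Lemma phi_lt x y : phi x y < a.
Proof. rewrite /phi; case: ifP => _; lia. Qed.
Lemma phi_ne x y : phi x y != cG x y.
Proof. by rewrite /phi; case: (cG x y =P 0) => [->|H] //; apply/eqP => E; apply: H. Qed.

Lemma Cl_col : edge_coloring LP (a + b) Cl.
Proof.
move=> [x u] [y v]; rewrite /lexprod /Cl /= => /orP[Hg | /andP[/eqP Exy Hh]].
  have [E1 L1] := cGP Hg.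
  case: eqP => [E|_]; first by move: Hg; rewrite E girr.
  have nyx : (y == x) = false by apply/eqP => E; move: Hg; rewrite E girr.
  rewrite nyx [v == u]eq_sym; case: (u == v); split => //.
  - by rewrite /phi E1.
  - have := phi_lt x y; lia.
  - lia.
have [E1 L1] := cHP Hh; rewrite Exy eqxx E1; split => //; lia.
Qed.

Lemma Cl_fiber x u v : Cl (x, u) (x, v) = a + cH u v.
Proof. by rewrite /Cl /= eqxx. Qed.

Lemma fiber_path x u p : path h u p ->
  path LP (x, u) (map (pair x) p) /\
  pairmap Cl (x, u) (map (pair x) p) = map (addn a) (pairmap cH u p).
Proof.
elim: p u => [|v p IH] u //= /andP[Huv Hp].
have [IH1 IH2] := IH _ Hp.
by rewrite /lexprod /= girr eqxx Huv IH1 IH2 Cl_fiber.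
Qed.

Fixpoint liftp (q : seq T) (e t : U) : seq (T * U) :=
  if q is v :: q' then (v, if odd (size q') then t else e) :: liftp q' e t else [::].
Definition hcoord (q : seq T) (e t : U) : U :=
  if q is v :: q' then (if odd (size q') then t else e) else t.

Lemma liftp_fst q e t : map fst (liftp q e t) = q.
Proof. by elim: q => [|v q IH] //=; rewrite IH. Qed.

Lemma liftp_last q e t w x : q != [::] -> last w (liftp q e t) = (last x q, e).
Proof.
elim: q w x => [|v q IH] w x //= _.
case: q IH => [|v' q] IH //=.
by apply: IH.
Qed.

Lemma hcoord_ne q e t : t != e -> (if odd (size q) then t else e) != hcoord q e t.
Proof.
move=> te; case: q => [|w q] //=; first by rewrite eq_sym.
by case: (odd (size q)) => /=; rewrite // eq_sym.
Qed.

Lemma liftp_path q e t x s : t != e -> path g x q -> s != hcoord q e t ->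
  path LP (x, s) (liftp q e t) /\ pairmap Cl (x, s) (liftp q e t) = pairmap cG x q.
Proof.
move=> te; elim: q x s => [|v q IH] x s //= /andP[Hxv Hq] Hs.
set cv := if odd (size q) then t else e.
have Hcv : cv != hcoord q e t by apply: hcoord_ne.
have [IH1 IH2] := IH v cv Hq Hcv.
rewrite IH1 IH2 /lexprod /= Hxv; split => //.
by rewrite /Cl /= (negbTE (g_neq Hxv)) (negbTE Hs).
Qed.

Definition okT (es : seq ((T * U) * (T * U))) (s1 s2 s3 : T * U) :=
  [/\ all (fun e => LP e.1 e.2) es, uniq (map (fun e => Cl e.1 e.2) es),
      {in tree_vertices es &, forall x y, connect (tree_rel es) x y},
      size es = #|tree_vertices es| - 1
    & [&& s1 \in tree_vertices es, s2 \in tree_vertices es & s3 \in tree_vertices es]].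

Lemma mk_ok es r s1 s2 s3 : good es r -> r \in tree_vertices es ->
  all (fun e => LP e.1 e.2) es -> uniq (map (fun e => Cl e.1 e.2) es) ->
  s1 \in Wv es r -> s2 \in Wv es r -> s3 \in Wv es r -> okT es s1 s2 s3.
Proof.
move=> G Hr HA HU H1 H2 H3; have [Hc Hs] := good_tree G Hr.
have EW : Wv es r = tree_vertices es.
  by apply/setP=> x; rewrite /Wv in_setU1; case: eqP => // ->; rewrite Hr.
by split => //; rewrite -EW H1 H2 H3.
Qed.

Lemma uniq_addn (s : seq nat) : uniq (map (addn a) s) = uniq s.
Proof. by apply: map_inj_uniq => x y /eqP; rewrite eqn_add2l => /eqP. Qed.

Lemma uniq_shift (s t : seq nat) : uniq s -> uniq t -> all (fun w => w < a) t ->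
  uniq (map (addn a) s ++ t).
Proof.
move=> Hs Ht Ha; rewrite cat_uniq uniq_addn Hs Ht andbT /=.
apply/hasP => -[w Hw /mapP [v _ Ev]]; have := allP Ha _ Hw; rewrite Ev; lia.
Qed.

Lemma pm_lt x q : path g x q -> all (fun w => w < a) (pairmap cG x q).
Proof.
elim: q x => [|y q IH] x //= /andP[Hxy Hq]; rewrite IH // andbT.
exact: (cGP Hxy).2.
Qed.


Lemma Cl_pair_uniq x y u1 u3 : g x y -> u1 != u3 ->
  pairmap Cl (x, u1) [:: (y, u1); (x, u3)] = [:: phi x y; cG x y].
Proof.
move=> Hy n13; rewrite /= /Cl /= eqxx (negbTE n13).
case: ifP => [/eqP E|_]; first by move: Hy; rewrite E girr.
case: ifP => [/eqP E|_]; first by move: Hy; rewrite E girr.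
by rewrite (cGP Hy).1.
Qed.

Lemma fib x u1 u2 u3 : u1 != u2 -> u1 != u3 -> u2 != u3 ->
  exists es, okT es (x, u1) (x, u2) (x, u3).
Proof.
move=> n12 n13 n23.
have [p [Hp Hu Hl Hc]] := hrc n12.
have [Hp' Hc'] := fiber_path x Hp.
have pn : p != [::] by apply/eqP => E; move: n12; rewrite -Hl E eqxx.
have uP : uniq ((x, u1) :: map (pair x) p).
  by rewrite -map_cons map_inj_uniq // => v w [].
set P := map (pair x) p in uP Hp' Hc'.
have Pn : P != [::] by rewrite /P; case: (p) pn.
have G1 := good_first uP.
have A1 : all (fun e => LP e.1 e.2) ([::] ++ pe (x, u1) P) by rewrite /= all_pe.
have C1 : map (fun e => Cl e.1 e.2) ([::] ++ pe (x, u1) P) = map (addn a) (pairmap cH u1 p).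
  by rewrite /= map_pe.
have M2 : (x, u2) \in Wv ([::] ++ pe (x, u1) P) (x, u1).
  by have := Wv_pe_last P (Wv_root [::] (x, u1)); rewrite /P last_map Hl.
have W1 : Wv ([::] ++ pe (x, u1) P) (x, u1) = [set (x, u1)] :|: [set v in P].
  by rewrite Wv_pe_set ?Wv_root // Wv_nil.
case: (boolP (u3 \in u1 :: p)) => H3.
  exists ([::] ++ pe (x, u1) P); apply: (mk_ok G1) => //.
  - exact: tv_first0.
  - by rewrite C1 uniq_addn.
  - exact: Wv_root.
  move: H3; rewrite inE => /orP[/eqP E|H3]; first by move: n13; rewrite E eqxx.
  by apply: Wv_pe_in (Wv_root _ _) _; rewrite /P map_f.
have [y Hy] := gnb x.
have nxy := g_neq Hy.
have Hdisj : forall v, v \in [:: (y, u1); (x, u3)] -> v \notin Wv ([::] ++ pe (x, u1) P) (x, u1).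
  move=> v; rewrite W1 !inE => /orP[]/eqP->; apply/negP => /orP[].
  - by move/eqP => [E]; move: nxy; rewrite E eqxx.
  - by move/mapP => [w _ [E _]]; move: nxy; rewrite E eqxx.
  - by move/eqP => [E]; move: n13; rewrite E eqxx.
  - by move/mapP => [w Hw [E]]; move: H3; rewrite inE E Hw orbT.
have U2 : uniq [:: (y, u1); (x, u3)].
  by rewrite /= inE andbT; apply/eqP => -[E _]; move: nxy; rewrite E eqxx.
have G2 := good_pend G1 (Wv_root _ _) U2 Hdisj.
exists (([::] ++ pe (x, u1) P) ++ pe (x, u1) [:: (y, u1); (x, u3)]).
apply: (mk_ok G2).
- exact: tv_first.
- rewrite all_cat A1 all_pe /= /lexprod /= Hy gsym Hy; by [].
- rewrite map_cat C1 map_pe Cl_pair_uniq //; apply: uniq_shift.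
  + exact: Hc.
  + by rewrite /= inE andbT phi_ne.
  + by rewrite /= phi_lt (cGP Hy).2.
- exact: Wv_cat_l (Wv_root _ _).
- exact: Wv_cat_l M2.
- by apply: Wv_pe_in (Wv_root _ _) _; rewrite !inE eqxx orbT.
Qed.


Lemma twoone x y u1 u2 u3 : x != y -> u1 != u2 ->
  exists es, okT es (x, u1) (x, u2) (y, u3).
Proof.
move=> nxy n12.
have [q [Hq Hql Hqu Hqc]] := gpath nxy.
have qn : q != [::] by apply/eqP => E; move: nxy; rewrite -Hql E eqxx.
have [t Ht] := hnb u3.
have te : t != u3 by rewrite eq_sym (h_neq Ht).
set hc := hcoord q u3 t.
pose s := if u1 != hc then u1 else u2.
pose s' := if u1 != hc then u2 else u1.
have sne : s != hc.
  by rewrite /s; case: ifP => [->|/negbFE/eqP <-] //; rewrite eq_sym.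
have ss' : s != s' by rewrite /s /s'; case: ifP => _ //; rewrite eq_sym.
have [p [Hp Hu Hl Hc]] := hrc ss'.
have [Hp' Hc'] := fiber_path x Hp.
have pn : p != [::] by apply/eqP => E; move: ss'; rewrite -Hl E eqxx.
have uP : uniq ((x, s) :: map (pair x) p).
  by rewrite -map_cons map_inj_uniq // => v w [].
set P := map (pair x) p in uP Hp' Hc'.
have Pn : P != [::] by rewrite /P; case: (p) pn.
have G1 := good_first uP.
set Q := liftp q u3 t.
have [HQ CQ] := liftp_path te Hq sne.
have uQ : uniq Q.
  apply: (@map_uniq _ _ fst); rewrite liftp_fst; by case/andP: Hqu.
have W1 : Wv ([::] ++ pe (x, s) P) (x, s) = [set (x, s)] :|: [set v in P].
  by rewrite Wv_pe_set ?Wv_root // Wv_nil.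
have Hdisj : forall v, v \in Q -> v \notin Wv ([::] ++ pe (x, s) P) (x, s).
  move=> v Hv; have H1 : v.1 \in q by rewrite -(liftp_fst q u3 t) map_f.
  rewrite W1 !inE; apply/negP => Hv2.
  have : x \in q.
    by case/orP: Hv2 => [/eqP E|/mapP [w _ E]]; rewrite E in H1.
  by case/andP: Hqu => /negbTE ->.
have G2 := good_pend G1 (Wv_root _ _) uQ Hdisj.
have Ms : (x, s) \in Wv (([::] ++ pe (x, s) P) ++ pe (x, s) Q) (x, s) by apply: Wv_root.
have Ms' : (x, s') \in Wv (([::] ++ pe (x, s) P) ++ pe (x, s) Q) (x, s).
  by apply: Wv_cat_l; have := Wv_pe_last P (Wv_root [::] (x, s)); rewrite /P last_map Hl.
have Hin : forall u, (u == s) || (u == s') ->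
    (x, u) \in Wv (([::] ++ pe (x, s) P) ++ pe (x, s) Q) (x, s).
  by move=> u /orP[]/eqP->.
exists (([::] ++ pe (x, s) P) ++ pe (x, s) Q); apply: (mk_ok G2).
- exact: tv_first.
- by rewrite all_cat /= !all_pe Hp' HQ.
- rewrite map_cat /= !map_pe Hc' CQ; apply: uniq_shift => //; exact: pm_lt Hq.
- by apply: Hin; rewrite /s /s'; case: ifP; rewrite eqxx ?orbT.
- by apply: Hin; rewrite /s /s'; case: ifP; rewrite eqxx ?orbT.
- have := Wv_pe_last Q (Wv_cat_l ([::] ++ pe (x, s) P) (Wv_root [::] (x, s))).
  by rewrite (@liftp_last q u3 t _ x qn) Hql.
Qed.


Lemma in_liftp l e t v : v \in liftp l e t -> v.1 \in l.
Proof. by move=> Hv; rewrite -(liftp_fst l e t) map_f. Qed.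

Lemma leg es z al be l e : al != be -> (z, be) \in Wv es (z, al) -> good es (z, al) ->
  path g z l -> uniq l -> (forall v, v.1 \in l -> v \notin Wv es (z, al)) ->
  exists gm L, [/\ good (es ++ pe (z, gm) L) (z, al),
      all (fun e => LP e.1 e.2) (pe (z, gm) L),
      map (fun e => Cl e.1 e.2) (pe (z, gm) L) = pairmap cG z l,
      Wv (es ++ pe (z, gm) L) (z, al) = Wv es (z, al) :|: [set v in L]
    & forall v, v \in L -> v.1 \in l] /\
    (l != [::] -> (last z l, e) \in Wv (es ++ pe (z, gm) L) (z, al)).
Proof.
move=> abe Hbe G Hl Ul Hd.
have [t Ht] := hnb e.
have te : t != e by rewrite eq_sym (h_neq Ht).
pose gm := if al != hcoord l e t then al else be.
have gne : gm != hcoord l e t.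
  by rewrite /gm; case: ifP => [->|/negbFE/eqP <-] //; rewrite eq_sym.
have Hgm : (z, gm) \in Wv es (z, al) by rewrite /gm; case: ifP => _ //; apply: Wv_root.
have [HL CL] := liftp_path te Hl gne.
have UL : uniq (liftp l e t) by apply: (@map_uniq _ _ fst); rewrite liftp_fst.
exists gm, (liftp l e t); split; first split.
- apply: good_pend G Hgm UL _ => v Hv; apply: Hd; exact: in_liftp Hv.
- by rewrite all_pe.
- by rewrite map_pe.
- exact: Wv_pe_set.
- exact: in_liftp.
- move=> ln; have := Wv_pe_last (liftp l e t) Hgm.
  by rewrite (@liftp_last l e t _ z ln).
Qed.

Lemma notin_cat (s1 s2 : seq T) v : uniq (s1 ++ s2) -> v \in s2 -> v \notin s1.
Proof.
rewrite cat_uniq => /and3P[_ H _] Hv; apply/negP => H1; move/hasP: H; apply.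
by exists v.
Qed.

Lemma dist x1 x2 x3 u1 u2 u3 : x1 != x2 -> x1 != x3 -> x2 != x3 ->
  exists es, okT es (x1, u1) (x2, u2) (x3, u3).
Proof.
move=> n12 n13 n23.
have [z [l1 [l2 [l3 [[P1 P2 P3] [[La1 La2 La3] [Uz Uc]]]]]]] := gspider n12 n13 n23.
move: (Uz); rewrite /= mem_cat negb_or => /andP[/andP[z1 z23] U123].
have z2 : z \notin l2 by move: z23; rewrite mem_cat negb_or => /andP[].
have z3 : z \notin l3 by move: z23; rewrite mem_cat negb_or => /andP[].
have U23 : uniq (l2 ++ l3) by move: U123; rewrite cat_uniq => /and3P[].
have ul1 : uniq l1 by move: U123; rewrite cat_uniq => /and3P[].
have ul2 : uniq l2 by move: U23; rewrite cat_uniq => /and3P[].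
have ul3 : uniq l3 by move: U23; rewrite cat_uniq => /and3P[].
have d12 : forall v, v \in l2 -> v \notin l1.
  by move=> v Hv; apply: notin_cat U123 _; rewrite mem_cat Hv.
have d13 : forall v, v \in l3 -> v \notin l1.
  by move=> v Hv; apply: notin_cat U123 _; rewrite mem_cat Hv orbT.
have d23 : forall v, v \in l3 -> v \notin l2 by move=> v Hv; apply: notin_cat U23 _.
set al := if l1 == [::] then u1 else if l2 == [::] then u2 else if l3 == [::] then u3 else u1.
have [be Hbe] := hnb al.
have abe : al != be := h_neq Hbe.
have U0 : uniq [:: (z, al); (z, be)].
  by rewrite /= inE andbT; apply/eqP => -[E]; move: abe; rewrite E eqxx.
have G0 := good_first U0.
have W0 : Wv ([::] ++ pe (z, al) [:: (z, be)]) (z, al) = [set (z, al)] :|: [set v in [:: (z, be)]].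
  by rewrite Wv_pe_set ?Wv_root // Wv_nil.
have Hbe0 : (z, be) \in Wv ([::] ++ pe (z, al) [:: (z, be)]) (z, al).
  by rewrite W0 !inE eqxx orbT.
have F0 : forall v, v \in Wv ([::] ++ pe (z, al) [:: (z, be)]) (z, al) -> v.1 = z.
  by move=> v; rewrite W0 !inE => /orP[]/eqP->.
have D1 : forall v, v.1 \in l1 -> v \notin Wv ([::] ++ pe (z, al) [:: (z, be)]) (z, al).
  by move=> v Hv; apply/negP => /F0 E; move: z1; rewrite -E Hv.
have [gm1 [L1 [[G1 A1 C1 W1 I1] M1]]] := leg u1 abe Hbe0 G0 P1 ul1 D1.
set es1 := ([::] ++ pe (z, al) [:: (z, be)]) ++ pe (z, gm1) L1 in G1 W1 M1.
have F1 : forall v, v \in Wv es1 (z, al) -> (v.1 == z) || (v.1 \in l1).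
  move=> v; rewrite W1 in_setU in_set => /orP[/F0 ->|/I1 ->]; by rewrite ?eqxx ?orbT.
have D2 : forall v, v.1 \in l2 -> v \notin Wv es1 (z, al).
  move=> v Hv; apply/negP => /F1 /orP[/eqP E|E]; first by move: z2; rewrite -E Hv.
  by move: (d12 _ Hv); rewrite E.
have [gm2 [L2 [[G2 A2 C2 W2 I2] M2]]] := leg u2 abe (Wv_cat_l _ Hbe0) G1 P2 ul2 D2.
set es2 := es1 ++ pe (z, gm2) L2 in G2 W2 M2.
have F2 : forall v, v \in Wv es2 (z, al) -> [|| v.1 == z, v.1 \in l1 | v.1 \in l2].
  move=> v; rewrite W2 in_setU in_set => /orP[/F1 /orP[]->|/I2 ->]; by rewrite ?orbT.
have D3 : forall v, v.1 \in l3 -> v \notin Wv es2 (z, al).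
  move=> v Hv; apply/negP => /F2 /or3P[/eqP E|E|E]; first by move: z3; rewrite -E Hv.
    by move: (d13 _ Hv); rewrite E.
  by move: (d23 _ Hv); rewrite E.
have [gm3 [L3 [[G3 A3 C3 W3 I3] M3]]] := leg u3 abe (Wv_cat_l _ (Wv_cat_l _ Hbe0)) G2 P3 ul3 D3.
set es3 := es2 ++ pe (z, gm3) L3 in G3 W3 M3.
have Hroot : forall es', (z, al) \in Wv (es2 ++ es') (z, al) by move=> es'; apply: Wv_root.
have Hmem : forall (xi : T) (ui : U) (li : seq T), last z li = xi ->
    (li = [::] -> ui = al) ->
    (li != [::] -> (last z li, ui) \in Wv es3 (z, al)) -> (xi, ui) \in Wv es3 (z, al).
  move=> xi ui li <- Ha Hm; case: (eqVneq li [::]) => [E|E]; last exact: Hm.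
  by rewrite E (Ha E) /=; apply: Wv_root.
exists es3; apply: (mk_ok G3).
- by rewrite /es3 /es2 /es1 !tv_cat !in_setU in_tv_pe mem_head !orbT.
- rewrite /es3 /es2 /es1 !all_cat A1 A2 A3 all_pe /= /lexprod /= eqxx Hbe orbT; by [].
- rewrite /es3 /es2 /es1 !map_cat C1 C2 C3 map_pe /= Cl_fiber.
  rewrite -!catA Uc andbT; apply/negP => Hin.
  have Ha : all (fun w => w < a) (pairmap cG z l1 ++ pairmap cG z l2 ++ pairmap cG z l3).
    by rewrite !all_cat !pm_lt.
  by have := allP Ha _ Hin; rewrite ltnNge leq_addr.
- apply: (Hmem _ _ l1 La1) => [E|]; first by rewrite /al E.
  by move=> ln; apply: Wv_cat_l; apply: Wv_cat_l; apply: M1.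
- apply: (Hmem _ _ l2 La2) => [E|].
    rewrite /al E; case: eqP => // E1; move: n12; by rewrite -La1 -La2 E E1 eqxx.
  by move=> ln; apply: Wv_cat_l; apply: M2.
- apply: (Hmem _ _ l3 La3) => [E|]; last exact: M3.
  rewrite /al E; case: eqP => E1; first by move: n13; rewrite -La1 -La3 E E1 eqxx.
  case: eqP => E2 //; by move: n23; rewrite -La2 -La3 E E2 eqxx.
Qed.

End Prod.

Section Gen.
Variable V : finType.

Lemma three_enum (S : {set V}) : #|S| = 3 -> exists s1 s2 s3,
  [/\ s1 != s2, s1 != s3, s2 != s3 & forall v, v \in S -> v \in [:: s1; s2; s3]].
Proof.
move=> HS; have := enum_uniq (mem S); have := cardE S; rewrite HS.
have Hm : forall v, (v \in S) = (v \in enum S) by move=> v; rewrite mem_enum.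
case: (enum S) Hm => [|s1 [|s2 [|s3 [|]]]] //= Hm _.
rewrite !inE negb_or => /and3P[/andP[n12 n13] n23 _].
by exists s1, s2, s3; split => // v; rewrite Hm.
Qed.

Lemma card3 (x y z : V) : x != y -> x != z -> y != z -> #|[set x; y; z]| = 3.
Proof.
move=> nxy nxz nyz.
have -> : [set x; y; z] = x |: [set y; z] by apply/setP => v; rewrite !inE orbA.
rewrite cardsU1 cards2 nyz !inE negb_or nxy nxz.
by [].
Qed.

Lemma size_lt (s : seq nat) k : uniq s -> all (fun w => w < k) s -> size s <= k.
Proof.
move=> Hu Ha; rewrite -(size_iota 0 k); apply: uniq_leq_size Hu _.
by move=> w Hw; rewrite mem_iota add0n (allP Ha _ Hw).
Qed.

Lemma tree_colors_size (e : rel V) k c S es : edge_coloring e k c -> rainbow_tree e c S es ->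
  size es <= k.
Proof.
move=> cP [HA HU _ _ _]; rewrite -(size_map (fun e0 : V * V => c e0.1 e0.2)).
apply: size_lt HU _; apply/allP => w /mapP [x Hx ->].
exact: (cP _ _ (allP HA _ Hx)).2.
Qed.

Lemma card_seq_tv (A : {set V}) (s : seq V) : uniq s -> {subset s <= A} -> size s <= #|A|.
Proof.
move=> Hu Hs; rewrite cardE; apply: uniq_leq_size Hu _ => v Hv; by rewrite mem_enum Hs.
Qed.

Lemma rx3_ge2 (e : rel V) k : rainbow_3_connecting e k -> 2 < #|V| -> 1 < k.
Proof.
move=> [c [cP Ht]] HV.
have [s1 [s2 [s3 [n12 n13 n23]]]] : exists s1 s2 s3 : V,
    [/\ s1 != s2, s1 != s3 & s2 != s3].
  have [s1 [s2 [_ _ n12]]] := card_gt1P (ltnW HV).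
  have : 0 < #|~: [set s1; s2]|.
    have := cardsC [set s1; s2]; rewrite cards2 n12 /==> E; move: HV; rewrite -E; lia.
  case/card_gt0P => s3; rewrite !inE negb_or => /andP[n31 n32].
  by exists s1, s2, s3; rewrite n12 eq_sym n31 eq_sym n32.
have [es Hes] := Ht _ (card3 n12 n13 n23).
have Hk := tree_colors_size cP Hes.
case: Hes => _ _ _ Hs HS.
have : 3 <= #|tree_vertices es|.
  rewrite -(card3 n12 n13 n23); exact: subset_leq_card.
lia.
Qed.

Lemma tree_rel_tv (es : seq (V * V)) (x y : V) : tree_rel es x y -> (x \in tree_vertices es) && (y \in tree_vertices es).
Proof.
rewrite /tree_rel !inE => /orP[]H; apply/andP; split; apply/hasP;
  by [exists (x, y); rewrite //= eqxx ?orbT | exists (y, x); rewrite //= eqxx ?orbT].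
Qed.

Lemma path_tv (es : seq (V * V)) (s : V) p : s \in tree_vertices es -> path (tree_rel es) s p ->
  {subset s :: p <= tree_vertices es}.
Proof.
elim: p s => [|y p IH] s Hs /=; first by move=> _ v; rewrite inE => /eqP->.
move=> /andP[Hsy Hp] v; rewrite inE => /orP[/eqP->//|].
apply: IH Hp v; by case/andP: (tree_rel_tv Hsy).
Qed.

End Gen.

Lemma arith1 d a b n : d <= b -> a + b.+1 < n -> d < n - 1.
Proof. lia. Qed.

Lemma arith2 d m n : d <= m -> m.+1 < n -> d < n - 1.
Proof. lia. Qed.

Section Main.
Variables (T U : finType) (g : rel T) (h : rel U).
Hypothesis gS : simple_graph g.
Hypothesis hS : simple_graph h.
Hypothesis gC : connected_graph g.
Hypothesis hC : connected_graph h.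
Hypothesis T3 : 2 < #|T|.
Hypothesis U2 : 1 < #|U|.

Local Notation LP := (lexprod g h).

Lemma LP_sym : symmetric LP.
Proof.
case: gS => gsym _; case: hS => hsym _.
move=> [x u] [y v]; rewrite /lexprod /= gsym hsym eq_sym; by [].
Qed.

Lemma walk_proj d x y : (forall p, path g x p -> last x p = y -> d <= size p) ->
  forall (s : T * U) q, s.1 = x -> path LP s q -> (last s q).1 = y -> d <= size q.
Proof.
move=> Hd.
have W : forall (s : T * U) q, path LP s q ->
    exists w, [/\ path g s.1 w, last s.1 w = (last s q).1 & size w <= size q].
  move=> s q; elim: q s => [|v q IH] s /=; first by exists [::].
  move=> /andP[Hsv Hq]; have [w [Hw Hl Hs]] := IH v Hq.
  move: Hsv; rewrite /lexprod => /orP[Hg|/andP[/eqP E _]].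
    by exists (v.1 :: w); rewrite /= Hg Hw Hl.
  by exists w; rewrite E Hw Hl; split => //; apply: leqW.
move=> s q Hs Hp Hl; have [w [Hw Hwl Hws]] := W s q Hp.
apply: leq_trans (Hd w _ _) Hws; by rewrite -Hs // Hwl.
Qed.

Lemma lower d c x y (h1 h2 : U) : x != y -> h1 != h2 ->
  (forall p, path g x p -> last x p = y -> d <= size p) ->
  rainbow_3_connecting LP c -> d.+1 <= c.
Proof.
move=> nxy n12 Hd [C [CP Ht]].
have na : (x, h1) != (x, h2) by apply/eqP => -[E]; move: n12; rewrite E eqxx.
have nb : (x, h1) != (y, h1) by apply/eqP => -[E]; move: nxy; rewrite E eqxx.
have nc : (x, h2) != (y, h1) by apply/eqP => -[E]; move: nxy; rewrite E eqxx.
have [es Hes] := Ht _ (card3 na nb nc).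
have Hk := tree_colors_size CP Hes.
case: Hes => HA HU Hc Hs HS.
have I1 : (x, h1) \in tree_vertices es by apply: (subsetP HS); rewrite !inE eqxx.
have I2 : (x, h2) \in tree_vertices es by apply: (subsetP HS); rewrite !inE eqxx orbT.
have I3 : (y, h1) \in tree_vertices es by apply: (subsetP HS); rewrite !inE eqxx !orbT.
have [p [Hp Hl Hu]] := tree_path Hc I1 I3.
have HpLP : path LP (x, h1) p by apply: sub_path Hp => u v; apply: (tree_rel_g LP_sym HA).
have Hsub := path_tv I1 Hp.
suff : d.+1 <= size es by move=> H; apply: leq_trans H Hk.
rewrite Hs.
case: (boolP ((x, h2) \in (x, h1) :: p)) => H2.
  have H2' : (x, h2) \in p by move: H2; rewrite inE eq_sym (negbTE na).
  case/splitPr: H2' Hp HpLP Hl Hu Hsub => p1 p2 Hp HpLP Hl Hu Hsub.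
  have Hp2 : path LP (x, h2) p2 by move: HpLP; rewrite cat_path => /andP[_] /= /andP[_].
  have Hl2 : (last (x, h2) p2).1 = y by move: Hl; rewrite last_cat /= => ->.
  have Hd2 := walk_proj Hd (s := (x, h2)) erefl Hp2 Hl2.
  have := card_seq_tv Hu Hsub; rewrite /= size_cat /=; exact: arith1.
have Hl1 : (last (x, h1) p).1 = y by rewrite Hl.
have Hd1 := walk_proj Hd (s := (x, h1)) erefl HpLP Hl1.
have Hu' : uniq ((x, h2) :: (x, h1) :: p) by rewrite cons_uniq H2 Hu.
have Hsub' : {subset (x, h2) :: (x, h1) :: p <= tree_vertices es}.
  by move=> v; rewrite inE => /orP[/eqP->|]; [exact: I2|exact: Hsub].
have := card_seq_tv Hu' Hsub'; rewrite /=; exact: arith2.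
Qed.

End Main.

Lemma rc_one (U : finType) (h : rel U) b : complete_graph h -> 1 < #|U| -> is_rc h b -> b = 1.
Proof.
move=> hK U2 [[cH [cHP hrc]] Hmin].
have [u [v [_ _ nuv]]] := card_gt1P U2.
have [p [Hp _ Hl _]] := hrc u v nuv.
have b1 : 0 < b.
  case: p Hp Hl => [|w p] /=; first by move=> _ E; move: nuv; rewrite E eqxx.
  by move=> /andP[Huw _] _; have := (cHP _ _ Huw).2; apply: leq_ltn_trans.
have b2 : b <= 1.
  apply: Hmin; exists (fun _ _ => 0); split; first by move=> x y _; split.
  move=> x y nxy; exists [:: y]; split => //=.
  - by rewrite hK.
  - by rewrite inE nxy.
lia.
Qed.

Lemma third (T : finType) (x y : T) : 2 < #|T| -> x != y ->
  exists w, [/\ x != w & y != w].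
Proof.
move=> T3 nxy.
have : 0 < #|~: [set x; y]|.
  have := cardsC [set x; y]; rewrite cards2 nxy /= => E; move: T3; rewrite -E; lia.
case/card_gt0P => w; rewrite !inE negb_or => /andP[n1 n2].
by exists w; rewrite eq_sym n1 eq_sym n2.
Qed.

Lemma pair_neq (T U : eqType) (x : T) (u v : U) : (x, u) != (x, v) -> u != v.
Proof. by apply: contraNneq => ->. Qed.

Section Prod2.
Variables (T U : finType) (g : rel T) (h : rel U).
Hypothesis gS : simple_graph g.
Hypothesis hS : simple_graph h.
Hypothesis gC : connected_graph g.
Hypothesis hC : connected_graph h.
Hypothesis T3 : 2 < #|T|.
Hypothesis U2 : 1 < #|U|.

Lemma to_rt a (cG : T -> T -> nat) (cH : U -> U -> nat) (S : {set T * U}) es p1 p2 p3 :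
  okT g h a cG cH es p1 p2 p3 -> {subset S <= [:: p1; p2; p3]} ->
  rainbow_tree (lexprod g h) (Cl a cG cH) S es.
Proof.
move=> [HA HU Hc Hs /and3P[M1 M2 M3]] HS; split => //.
apply/subsetP => v /HS; rewrite !in_cons in_nil orbF => /or3P[]/eqP->; by [].
Qed.

Lemma product_rx3 a b : rainbow_3_connecting g a -> rainbow_connecting h b ->
  rainbow_3_connecting (lexprod g h) (a + b).
Proof.
case: gS => gsym girr; case: hS => hsym hirr.
move=> Hg [cH [cHP hrc]].
have a2 := rx3_ge2 Hg T3.
case: Hg => cG [cGP grx].
have gnb := neighbor girr gC (ltnW T3).
have hnb := neighbor hirr hC U2.
have gpath : forall x y, x != y ->
    exists q, [/\ path g x q, last x q = y, uniq (x :: q) & uniq (pairmap cG x q)].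
  move=> x y nxy; have [w [nxw nyw]] := third T3 nxy.
  have [es [HA HU Hc Hs HS]] := grx _ (card3 nxy nxw nyw).
  by apply: (rainbow_tree_path gsym cGP HA HU Hc); apply: (subsetP HS); rewrite !inE eqxx ?orbT.
have gspider : forall x1 x2 x3, x1 != x2 -> x1 != x3 -> x2 != x3 ->
  exists z l1 l2 l3, [/\ path g z l1, path g z l2 & path g z l3] /\
    [/\ last z l1 = x1, last z l2 = x2 & last z l3 = x3] /\
    uniq (z :: l1 ++ l2 ++ l3) /\
    uniq (pairmap cG z l1 ++ pairmap cG z l2 ++ pairmap cG z l3).
  move=> x1 x2 x3 n12 n13 n23.
  have [es [HA HU Hc Hs HS]] := grx _ (card3 n12 n13 n23).
  by apply: (spider gsym cGP HA HU Hc); apply: (subsetP HS); rewrite !inE eqxx ?orbT.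
exists (Cl a cG cH); split; first exact: Cl_col girr cGP cHP a2.
move=> S HS; have [[x1 u1] [[x2 u2] [[x3 u3] [n12 n13 n23 Hin]]]] := three_enum HS.
case: (eqVneq x1 x2) => [E12|N12]; case: (eqVneq x1 x3) => [E13|N13];
  case: (eqVneq x2 x3) => [E23|N23].
- rewrite -E12 in n12 n23 Hin; rewrite -E13 in n13 n23 Hin.
  have [es Hes] := fib gsym girr cGP a2 hrc gnb x1 (pair_neq n12) (pair_neq n13) (pair_neq n23).
  by exists es; apply: to_rt Hes _.
- by move: N23; rewrite -E12 -E13 eqxx.
- by move: N13; rewrite E12 E23 eqxx.
- rewrite -E12 in n12 n23 Hin.
  have [es Hes] := twoone girr hirr cGP a2 hrc hnb gpath u3 N13 (pair_neq n12).
  by exists es; apply: to_rt Hes _.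
- by move: N12; rewrite E13 E23 eqxx.
- rewrite -E13 in n13 n23 Hin.
  have [es Hes] := twoone girr hirr cGP a2 hrc hnb gpath u2 N12 (pair_neq n13).
  exists es; apply: to_rt Hes _ => v /Hin; rewrite !inE => /or3P[]->; by rewrite ?orbT.
- rewrite -E23 in n13 n23 Hin.
  have [es Hes] := twoone girr hirr cGP a2 hrc hnb gpath u1 (negbT (introF eqP (fun E => negP N12 (introT eqP (esym E))))) (pair_neq n23).
  exists es; apply: to_rt Hes _ => v /Hin; rewrite !inE => /or3P[]->; by rewrite ?orbT.
- have [es Hes] := dist cH girr hirr cGP hnb gspider u1 u2 u3 N12 N13 N23.
  by exists es; apply: to_rt Hes _.
Qed.

End Prod2.

Theorem theorem7 (T U : finType) (g : rel T) (h : rel U) :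
  simple_graph g -> simple_graph h ->
  connected_graph g -> connected_graph h ->
  2 < #|T| -> 1 < #|U| ->
  ~ (complete_graph g /\ complete_graph h) ->
  (forall a b c, is_rx3 g a -> is_rc h b -> is_rx3 (lexprod g h) c ->
     c <= a + b) /\
  (forall d a b c, is_diam g d -> is_rx3 g a -> d = a -> complete_graph h ->
     is_rc h b -> is_rx3 (lexprod g h) c -> c = a + b).
Proof.
move=> gS hS gC hC T3 U2 _.
have P1 : forall a b c, is_rx3 g a -> is_rc h b -> is_rx3 (lexprod g h) c -> c <= a + b.
  move=> a b c [Ha _] [Hb _] [_ Hc]; apply: Hc; exact: product_rx3.
split => //.
move=> d a b c [_ [x [y Hd]]] Ha Eda hK Hb Hc.
have b1 : b = 1 := rc_one hK U2 Hb.
have a2 : 1 < a := rx3_ge2 Ha.1 T3.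
have nxy : x != y.
  apply/eqP => E; have := Hd [::] erefl; rewrite /= E => /(_ erefl); lia.
have [h1 [h2 [_ _ n12]]] := card_gt1P U2.
have L := lower gS hS nxy n12 Hd Hc.1.
have := P1 a b c Ha Hb Hc; lia.
Qed.
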